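(* Let $\Delta$ be a finite saturated sample set, $\delta$ a $\Delta$-diagram, and $t_1,t_2$ basic terms. If the time warps $f_1$ and $f_2$ strongly extend $D_{t_1}(\delta)$ and $D_{t_2}(\delta)$, respectively, then $f_1\circ f_2$ strongly extends $D_{t_1t_2}(\delta)$.
   Context: Time warps: join-preserving maps $f\colon\omega^+\to\omega^+$, $\omega^+=\omega\cup\{\omega\}$; $\mathrm{last}(f)=\min\{m\in\omega^+\mid f(m)=f(\omega)\}$. Basic terms are built from variables using $\cdot,{}',1$. Samples (formal expressions): $\alpha::=\kappa\mid t[\alpha]\mid \mathrm{suc}(\alpha)\mid\mathrm{last}(t)$ with $\kappa$ a time variable and $t$ a basic term. The relation $\leadsto$: $t[\alpha]\leadsto\alpha$, $\mathrm{suc}(\alpha)\leadsto\alpha$, $t[\alpha]\leadsto t[\mathrm{last}(t)]$, $(tu)[\alpha]\leadsto t[u[\alpha]]$, $t'[\alpha]\leadsto t[t'[\alpha]]$, $t'[\alpha]\leadsto t[\mathrm{suc}(t'[\alpha])]$; a sample set is saturated if closed under $\leadsto$. $S(n)=n+1$ for $n\in\omega$, $S(\omega)=\omega$. For saturated $\Delta$, a $\Delta$-diagram is $\delta\colon\Delta\to\omega^+$ such that, whenever the samples mentioned belong to $\Delta$: (1) $\delta(\alpha)\le\delta(\beta)\Rightarrow\delta(t[\alpha])\le\delta(t[\beta])$; (2) $\delta(\alpha)=0\Rightarrow\delta(t[\alpha])=0$; (3) $\delta(\mathrm{suc}(\alpha))=S(\delta(\alpha))$; (4) for $t[\alpha]\in\Delta$: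 $\delta(\mathrm{last}(t))\le\delta(\alpha)\iff\delta(t[\mathrm{last}(t)])=\delta(t[\alpha])$; (5) $\delta(\mathrm{last}(t))=\omega\Rightarrow\delta(t[\mathrm{last}(t)])=\omega$; (6) $\delta(1[\alpha])=\delta(\alpha)$; (7) $\delta(\mathrm{last}(1))=\omega$; (8) $\delta((tu)[\alpha])=\delta(t[u[\alpha]])$; (9) $\delta(\mathrm{last}(tu))=\omega\Rightarrow\delta(\mathrm{last}(t))=\delta(\mathrm{last}(u))=\omega$; (10) for $t'[\alpha]\in\Delta$: $0<\delta(\alpha)<\omega\Rightarrow\delta(t[t'[\alpha]])<\delta(\alpha)$; (11) for $t'[\alpha]\in\Delta$: $\delta(t'[\alpha])<\omega\Rightarrow\delta(\alpha)\le\delta(t[\mathrm{suc}(t'[\alpha])])$; (12) $\delta(\mathrm{last}(t'))=\omega\Rightarrow\delta(\mathrm{last}(t))=\omega$. For a basic term $t$, $D_t(\delta)=\{(\delta(\alpha),\delta(t[\alpha]))\mid t[\alpha]\in\Delta\}$. A time warp $f$ extends $D_t(\delta)$ if $f(i)=j$ for all $(i,j)\in D_t(\delta)$, and strongly extends it if moreover $D_t(\delta)\neq\emptyset$ and $\delta(\mathrm{last}(t))=\omega$ together imply $\mathrm{last}(f)=\omega$. *)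

(* Defs.v *)
From Stdlib Require Import List.

(* omega^+ = omega ∪ {omega} *)
Inductive wp : Type := Fin (n : nat) | Om.

Definition wle (x y : wp) : Prop :=
  match x, y with
  | Fin m, Fin n => m <= n
  | _, Om => True
  | Om, Fin _ => False
  end.

Definition wlt (x y : wp) : Prop := wle x y /\ x <> y.

Definition wS (x : wp) : wp := match x with Fin n => Fin (S n) | Om => Om end.

Definition is_lub (S : wp -> Prop) (x : wp) : Prop :=
  (forall y, S y -> wle y x) /\ (forall z, (forall y, S y -> wle y z) -> wle x z).

Definition time_warp (f : wp -> wp) : Prop :=
  forall (S : wp -> Prop) (x : wp),
    is_lub S x -> is_lub (fun y => exists z, S z /\ y = f z) (f x).

Definition is_last (f : wp -> wp) (m : wp) : Prop :=
  f m = f Om /\ forall k, f k = f Om -> wle m k.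

Inductive term : Type :=
| TVar (x : nat)
| TMul (t u : term)
| TPrime (t : term)
| TOne.

Inductive sample : Type :=
| SVar (k : nat)
| SApp (t : term) (a : sample)
| SSuc (a : sample)
| SLast (t : term).

Inductive leadsto : sample -> sample -> Prop :=
| ls_app t a : leadsto (SApp t a) a
| ls_suc a : leadsto (SSuc a) a
| ls_last t a : leadsto (SApp t a) (SApp t (SLast t))
| ls_mul t u a : leadsto (SApp (TMul t u) a) (SApp t (SApp u a))
| ls_prime1 t a : leadsto (SApp (TPrime t) a) (SApp t (SApp (TPrime t) a))
| ls_prime2 t a : leadsto (SApp (TPrime t) a) (SApp t (SSuc (SApp (TPrime t) a))).

Definition sample_set := sample -> Prop.

Definition finite_set (D : sample_set) : Prop :=
  exists l : list sample, forall a, D a <-> In a l.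

Definition saturated (D : sample_set) : Prop :=
  forall a b, D a -> leadsto a b -> D b.

(* A Delta-diagram; delta is given as a total function, only its values on
   Delta matter. Each condition is imposed whenever the samples mentioned
   belong to Delta. *)
Definition diagram (D : sample_set) (d : sample -> wp) : Prop :=
  (forall t a b, D a -> D b -> D (SApp t a) -> D (SApp t b) ->
     wle (d a) (d b) -> wle (d (SApp t a)) (d (SApp t b))) /\
  (forall t a, D a -> D (SApp t a) -> d a = Fin 0 -> d (SApp t a) = Fin 0) /\
  (forall a, D a -> D (SSuc a) -> d (SSuc a) = wS (d a)) /\
  (forall t a, D (SApp t a) -> D a -> D (SLast t) -> D (SApp t (SLast t)) ->
     (wle (d (SLast t)) (d a) <-> d (SApp t (SLast t)) = d (SApp t a))) /\
  (forall t, D (SLast t) -> D (SApp t (SLast t)) ->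
     d (SLast t) = Om -> d (SApp t (SLast t)) = Om) /\
  (forall a, D a -> D (SApp TOne a) -> d (SApp TOne a) = d a) /\
  (D (SLast TOne) -> d (SLast TOne) = Om) /\
  (forall t u a, D (SApp (TMul t u) a) -> D (SApp t (SApp u a)) ->
     d (SApp (TMul t u) a) = d (SApp t (SApp u a))) /\
  (forall t u, D (SLast (TMul t u)) -> D (SLast t) -> D (SLast u) ->
     d (SLast (TMul t u)) = Om -> d (SLast t) = Om /\ d (SLast u) = Om) /\
  (forall t a, D (SApp (TPrime t) a) -> D a -> D (SApp t (SApp (TPrime t) a)) ->
     wlt (Fin 0) (d a) -> wlt (d a) Om ->
     wlt (d (SApp t (SApp (TPrime t) a))) (d a)) /\
  (forall t a, D (SApp (TPrime t) a) -> D a ->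
     D (SApp t (SSuc (SApp (TPrime t) a))) ->
     wlt (d (SApp (TPrime t) a)) Om ->
     wle (d a) (d (SApp t (SSuc (SApp (TPrime t) a))))) /\
  (forall t, D (SLast (TPrime t)) -> D (SLast t) ->
     d (SLast (TPrime t)) = Om -> d (SLast t) = Om).

Definition Dt (D : sample_set) (d : sample -> wp) (t : term) (p : wp * wp) : Prop :=
  exists a, D (SApp t a) /\ p = (d a, d (SApp t a)).

Definition extends (f : wp -> wp) (R : wp * wp -> Prop) : Prop :=
  forall i j, R (i, j) -> f i = j.

Definition strongly_extends (D : sample_set) (d : sample -> wp) (t : term)
  (f : wp -> wp) : Prop :=
  extends f (Dt D d t) /\
  ((exists p, Dt D d t p) -> d (SLast t) = Om -> is_last f Om).

(* Main.v *)
Require Import Defs.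
From Stdlib Require Import Lia.

Lemma last_om_fix (f : wp -> wp) : time_warp f -> is_last f Om -> f Om = Om.
Proof.
  intros Hf [_ Hl].
  assert (Hlub : is_lub (fun y => exists n, y = Fin n) Om).
  { split. - intros y _. destruct y; exact I.
    - intros z Hz. destruct z as [k|]; [|exact I].
      specialize (Hz (Fin (S k)) (ex_intro _ _ eq_refl)). simpl in Hz. lia. }
  destruct (Hf _ _ Hlub) as [Hub Hleast].
  destruct (f Om) as [m|] eqn:E; [|reflexivity].
  exfalso.
  assert (Hne : forall n, f (Fin n) <> Fin m).
  { intros n Heq. specialize (Hl (Fin n)). apply Hl in Heq. exact Heq. }
  destruct m as [|m].
  - specialize (Hub (f (Fin 0)) (ex_intro _ (Fin 0) (conj (ex_intro _ 0 eq_refl) eq_refl))).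
    destruct (f (Fin 0)) as [k|] eqn:E0; simpl in Hub; [|contradiction].
    apply (Hne 0). rewrite E0. f_equal. lia.
  - specialize (Hleast (Fin m)).
    assert (H : wle (Fin (S m)) (Fin m)).
    { apply Hleast. intros y [z [[n ->] ->]].
      specialize (Hub (f (Fin n)) (ex_intro _ (Fin n) (conj (ex_intro _ n eq_refl) eq_refl))).
      specialize (Hne n).
      destruct (f (Fin n)) as [k|]; simpl in *; [|contradiction].
      assert (k <> S m) by congruence. lia. }
    simpl in H. lia.
Qed.

Theorem lemma3p5 (D : sample_set) (d : sample -> wp) (t1 t2 : term)
  (f1 f2 : wp -> wp) :
  finite_set D -> saturated D -> diagram D d ->
  time_warp f1 -> time_warp f2 ->
  strongly_extends D d t1 f1 -> strongly_extends D d t2 f2 ->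
  strongly_extends D d (TMul t1 t2) (fun x => f1 (f2 x)).
Proof.
  intros _ Hsat Hd Hf1 Hf2 [E1 L1] [E2 L2].
  destruct Hd as (_&_&_&_&_&_&_&H8&H9&_).
  split.
  - intros i j [a [Ha Hp]]. injection Hp as -> ->.
    assert (Hb : D (SApp t1 (SApp t2 a))) by (eapply Hsat; [exact Ha| constructor]).
    assert (Hc : D (SApp t2 a)) by (eapply Hsat; [exact Hb| constructor]).
    rewrite (E2 (d a) (d (SApp t2 a))) by (exists a; auto).
    rewrite (E1 (d (SApp t2 a)) (d (SApp t1 (SApp t2 a)))) by (exists (SApp t2 a); auto).
    symmetry; apply H8; auto.
  - intros [p [a [Ha _]]] Hom.
    assert (Hb : D (SApp t1 (SApp t2 a))) by (eapply Hsat; [exact Ha| constructor]).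
    assert (Hc : D (SApp t2 a)) by (eapply Hsat; [exact Hb| constructor]).
    assert (HL : D (SLast (TMul t1 t2))).
    { eapply Hsat; [eapply Hsat; [exact Ha| apply ls_last]| constructor]. }
    assert (HL1 : D (SLast t1)).
    { eapply Hsat; [eapply Hsat; [exact Hb| apply ls_last]| constructor]. }
    assert (HL2 : D (SLast t2)).
    { eapply Hsat; [eapply Hsat; [exact Hc| apply ls_last]| constructor]. }
    destruct (H9 t1 t2 HL HL1 HL2 Hom) as [O1 O2].
    assert (I1 := L1 (ex_intro _ _ (ex_intro _ _ (conj Hb eq_refl))) O1).
    assert (I2 := L2 (ex_intro _ _ (ex_intro _ _ (conj Hc eq_refl))) O2).
    assert (F2 := last_om_fix f2 Hf2 I2).
    split; [reflexivity|].
    intros k Hk. rewrite F2 in Hk.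
    destruct I1 as [_ I1']. apply I1' in Hk.
    destruct I2 as [_ I2']. apply I2'. rewrite F2.
    destruct (f2 k); simpl in Hk; [contradiction|reflexivity].
Qed.
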